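(* Let $(P, T, h)$ be an acyclic sensor network and let $P_{\chi}$ be a $\chi$-minimal model of $P$. Let $\widetilde{P}_{\chi} = \{x \in P_{\chi} \mid h(x) \ge 1\}$ with the order induced from $P$. Then \[ \int_{\widetilde{P}_{\chi}} h|_{\widetilde{P}_{\chi}} \, d\chi = \int_{P} h \, d\chi . \]
   Context: For a finite poset $P$, the zeta function is the $P \times P$ matrix with $\zeta(x,y)=1$ if $x \le y$ and $0$ otherwise; it is invertible, and the Euler characteristic is $\chi(P) = \sum_{x,y} \zeta^{-1}(x,y)$ ($\chi(\emptyset)=0$). A filter is an upward-closed subset; $\delta_S$ is the indicator function of $S$. Every $g : P \to \mathbb{Z}$ can be written as $g = \sum_i a_i \delta_{S_i}$ with $a_i \in \mathbb{Z}$ and $S_i$ filters; the Euler calculus is $\int_P g\, d\chi = \sum_i a_i \chi(S_i)$, independent of the representation; for a subposet $S$, $\int_S g|_S\, d\chi$ is computed in the poset $S$. A point $x$ of a finite poset $R$ is a $\chi$-point if $\chi(R_{>x}) = 1$, where $R_{>x} = \{y \in R \mid y > x\}$. A $\chi$-minimal model of $P$ is a subposet obtained from $P$ by repeatedly removing one point that is a $\chi$-point of the current subposet, until no $\chi$-points remain. An acyclic sensor network $(P,T,h)$ consists of a finite poset $P$, a finite set $T$ of targets, which are points of the Hasse diagram of $P$ viewed as a one-dimensional simplicial complex (each target lies at a node or in the interior of an edge), and the counting function $h : P \to \mathbb{Z}_{\ge 0}$, where $h(x)$ is the number of targets lying in the part of the Hasse diagram spanned by the prime ideal $P_{\le x}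 = \{y \in P \mid y \le x\}$ (i.e. at nodes of $P_{\le x}$ or on edges between nodes of $P_{\le x}$). *)

(* Defs.v *)
From HB Require Import structures.
From mathcomp Require Import all_boot all_order all_algebra.
Set Implicit Arguments. Unset Strict Implicit. Unset Printing Implicit Defensive.
Import Order.Theory GRing.Theory.

Local Open Scope ring_scope.

Section Defs.
Variables (d : Order.disp_t) (T : finPOrderType d).

Definition zeta_mx (S : {set T}) : 'M[int]_#|S| :=
  \matrix_(i, j) ((enum_val i <= enum_val j)%O : nat)%:R.

Definition euler_char (S : {set T}) : int :=
  \sum_i \sum_j (invmx (zeta_mx S)) i j.

Definition is_filter (S F : {set T}) : Prop :=
  F \subset S /\ forall x y, x \in F -> y \in S -> (x <= y)%O -> y \in F.

Definition is_euler_integral (S : {set T}) (g : T -> int) (v : int) : Prop :=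
  exists r : seq (int * {set T}),
    (forall p, p \in r -> is_filter S p.2) /\
    (forall x, x \in S -> g x = \sum_(p <- r) p.1 * (x \in p.2)%:R) /\
    v = \sum_(p <- r) p.1 * euler_char p.2.

Definition strict_up (R : {set T}) (x : T) : {set T} :=
  [set y in R | (x < y)%O].

Definition chi_point (R : {set T}) (x : T) : Prop :=
  x \in R /\ euler_char (strict_up R x) = 1.

Inductive chi_reduction : {set T} -> {set T} -> Prop :=
| chi_red_refl R : chi_reduction R R
| chi_red_step R x Q : chi_point R x -> chi_reduction (R :\ x) Q ->
    chi_reduction R Q.

Definition chi_minimal_model (Q : {set T}) : Prop :=
  chi_reduction [set: T] Q /\ forall x, ~ chi_point Q x.

Definition covers (x y : T) : bool :=
  (x < y)%O && [forall z : T, ~~ ((x < z)%O && (z < y)%O)].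

(* Targets: a finite type Tg with locations; inl x = at node x,
   inr (x, y) = in the interior of the Hasse edge x -< y. *)
Definition target_loc_ok (Tg : finType) (loc : Tg -> T + (T * T)) : Prop :=
  (forall t x y, loc t = inr (x, y) -> covers x y) /\
  (forall t1 t2 x, loc t1 = inl x -> loc t2 = inl x -> t1 = t2).

Definition in_ideal_part (x : T) (l : T + (T * T)) : bool :=
  match l with
  | inl y => (y <= x)%O
  | inr (y, z) => (y <= x)%O && (z <= x)%O
  end.

Definition count_fun (Tg : finType) (loc : Tg -> T + (T * T)) (x : T) : nat :=
  #|[set t : Tg | in_ideal_part x (loc t)]|.

End Defs.

(* Main.v *)
Require Import Defs.
From mathcomp Require Import all_boot all_order all_algebra.
From mathcomp Require Import fingroup perm.
Set Implicit Arguments. Unset Strict Implicit. Unset Printing Implicit Defensive.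
Import Order.Theory GRing.Theory.
Local Open Scope ring_scope.

Section Aux.
Variables (d : Order.disp_t) (T : finPOrderType d).

Lemma perm_up_id n (f : 'I_n -> T) (s : 'S_n) :
  injective f -> (forall i, (f i <= f (s i))%O) -> s = 1%g.
Proof.
move=> finj H; apply/permP => i; apply: (etrans _ (esym (perm1 i))).
have Hn : forall k, (f i <= f ((s ^+ k)%g i))%O.
  elim=> [|k IH]; first by rewrite expg0 perm1.
  by rewrite expgSr permM (le_trans IH (H _)).
set j := ((s ^+ (#[s]%g.-1))%g i).
have sj : s j = i.
  rewrite /j -permM -expgSr prednK ?order_gt0 //.
  by rewrite expg_order perm1.
have h1 := Hn #[s]%g.-1; rewrite -/j in h1.
have h2 := H j; rewrite sj in h2.
have ej : j = i by apply: finj; apply/le_anti; rewrite h1 h2.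
by rewrite -{2}sj ej.
Qed.

Lemma zeta_unit (S : {set T}) : zeta_mx S \in unitmx.
Proof.
rewrite unitmxE.
suff -> : \det (zeta_mx S) = 1 by rewrite unitr1.
rewrite /determinant (bigD1 1%g) //= [X in _ + X]big1 ?addr0.
  rewrite odd_perm1 expr0 mul1r big1 // => i _.
  have -> : (1%g : 'S_#|S|) i = i by exact: perm1.
  by rewrite !mxE lexx.
move=> s sn1.
have : ~~ [forall i, (enum_val i <= enum_val (s i))%O].
  apply/negP => /forallP H; move: sn1; rewrite (perm_up_id (f := enum_val) _ H) ?eqxx //.
  exact: enum_val_inj.
rewrite negb_forall => /existsP [i Hi].
by rewrite (bigD1 i) //= mxE (negbTE Hi) mul0r mulr0.
Qed.

Definition W (S : {set T}) (x : T) : int :=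
  \sum_(i < #|S| | enum_val i == x) \sum_j invmx (zeta_mx S) i j.

Lemma W_enum (S : {set T}) (i : 'I_#|S|) : W S (enum_val i) = \sum_j invmx (zeta_mx S) i j.
Proof.
rewrite /W (big_pred1 i) // => k /=.
by apply/eqP/eqP => [/enum_val_inj|->].
Qed.

Lemma W_out (S : {set T}) x : x \notin S -> W S x = 0.
Proof.
move=> xS; rewrite /W big_pred0 // => i.
by apply/negbTE; apply: contra xS => /eqP <-; apply: enum_valP.
Qed.

Lemma sum_W (S : {set T}) (F : T -> int) :
  \sum_(x in S) F x * W S x = \sum_i F (enum_val i) * \sum_j invmx (zeta_mx S) i j.
Proof. by rewrite big_enum_val; apply: eq_bigr => i _; rewrite W_enum. Qed.

Lemma euler_W (S : {set T}) : euler_char S = \sum_(x in S) W S x.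
Proof.
have := sum_W S (fun _ => 1); rewrite /euler_char.
under eq_bigr do rewrite mul1r.
by move=> ->; apply: eq_bigr => i _; rewrite mul1r.
Qed.

Lemma W_eq (S : {set T}) x : x \in S -> \sum_(k in S | (x <= k)%O) W S k = 1.
Proof.
move=> xS; set a := enum_rank_in xS x.
have ea : enum_val a = x by rewrite /a (enum_rankK_in xS xS).
move: (congr1 (fun M : 'M[int]_#|S| => \sum_c M a c) (mulmxV (zeta_unit S))) => /=.
have -> : \sum_c (1%:M : 'M[int]_#|S|) a c = 1.
  rewrite (bigD1 a) //= mxE eqxx big1 ?addr0 // => c ca.
  by rewrite mxE eq_sym (negbTE ca).
move=> <-.
rewrite big_mkcondr /=.
transitivity (\sum_(k in S) (((x <= k)%O : nat)%:R * W S k)).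
  by apply: eq_bigr => k _; case: (x <= k)%O; rewrite ?mul1r ?mul0r.
rewrite sum_W; under [RHS]eq_bigr do rewrite mxE.
rewrite [RHS]exchange_big /=; apply: eq_bigr => b _.
rewrite mulr_sumr; apply: eq_bigr => c _.
by rewrite !mxE ea.
Qed.


Definition upc (S : {set T}) (x : T) := #|[set k in S | (x < k)%O]|.

Lemma upc_lt (S : {set T}) x k : k \in S -> (x < k)%O -> (upc S k < upc S x)%N.
Proof.
move=> kS xk; apply: proper_card; apply/properP; split.
  apply/subsetP => z; rewrite !inE => /andP[-> kz] /=; exact: lt_trans xk kz.
by exists k; rewrite !inE ?kS ?xk ?ltxx.
Qed.

Lemma W_unique (S : {set T}) (u : T -> int) :
  (forall x, x \in S -> \sum_(k in S | (x <= k)%O) u k = 0) ->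
  forall x, x \in S -> u x = 0.
Proof.
move=> Hu x; suff : forall n x, (upc S x <= n)%N -> x \in S -> u x = 0 by apply.
elim=> [|n IH] {}x cx xS; have := Hu x xS;
  rewrite (bigD1 x) /= ?xS ?lexx // big1 ?addr0 // => k /andP[/andP[kS xk] kx];
  have lt : (upc S k < upc S x)%N by apply: upc_lt => //; rewrite lt_neqAle xk eq_sym kx.
  by have := leq_trans lt cx.
by apply: IH kS; rewrite -ltnS (leq_trans lt cx).
Qed.

Lemma W_sub (S Q : {set T}) : Q \subset S ->
  (forall x, x \in Q -> \sum_(k in S | (x <= k)%O) W S k = \sum_(k in Q | (x <= k)%O) W S k) ->
  forall x, x \in Q -> W Q x = W S x.
Proof.
move=> QS HQ x xQ; apply/eqP; rewrite -subr_eq0; apply/eqP; move: x xQ.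
apply: (W_unique (u := fun k => W Q k - W S k)) => x xQ.
by rewrite sumrB W_eq // -HQ // W_eq ?subrr // (subsetP QS).
Qed.

Lemma W_filter (S F : {set T}) : is_filter S F -> forall x, x \in F -> W F x = W S x.
Proof.
move=> [FS HF]; apply: W_sub => // x xF; apply: eq_bigl => k.
case kF: (k \in F); first by rewrite (subsetP FS).
by case kS: (k \in S) => //=; apply/negbTE; apply: contraFN kF; exact: HF.
Qed.

Lemma strict_up_filter (R : {set T}) x : is_filter R (strict_up R x).
Proof.
split; first by apply/subsetP => y; rewrite inE => /andP[].
by move=> y z; rewrite !inE => /andP[_ xy] -> yz /=; exact: lt_le_trans xy yz.
Qed.

Lemma up_filter (R : {set T}) x : is_filter R [set y in R | (x <= y)%O].
Proof.
split; first by apply/subsetP => y; rewrite inE => /andP[].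
by move=> y z; rewrite !inE => /andP[_ xy] -> yz /=; exact: le_trans xy yz.
Qed.

Lemma chi_point_W0 (R : {set T}) x : chi_point R x -> W R x = 0.
Proof.
move=> [xR hx].
have := W_eq xR; rewrite (bigD1 x) /= ?xR ?lexx //.
move=> H; suff E : \sum_(i | (i \in R) && (x <= i)%O && (i != x)) W R i = 1.
  move: H; rewrite E => H; have : W R x + 1 - 1 = 0 by rewrite H subrr.
  by rewrite addrK.
rewrite -hx euler_W; apply: esym; apply: eq_big => k.
  by rewrite /strict_up inE lt_def; case: (k \in R); case: (k != x); case: (x <= k)%O.
move=> kS; exact: (W_filter (strict_up_filter R x) kS).
Qed.

Lemma chi_point_remove (R : {set T}) x : chi_point R x ->
  forall y, y \in R :\ x -> W (R :\ x) y = W R y.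
Proof.
move=> cp; have W0 := chi_point_W0 cp.
apply: W_sub; first exact: subD1set.
move=> y _; rewrite (bigID (fun k => k == x)) /= big1 ?add0r.
  by apply: eq_bigl => k; rewrite !inE andbC andbA.
by move=> k /andP[_ /eqP ->].
Qed.

Lemma reduction_W (R Q : {set T}) : chi_reduction R Q ->
  [/\ Q \subset R, (forall y, y \in Q -> W Q y = W R y) &
      (forall y, y \in R -> y \notin Q -> W R y = 0)].
Proof.
elim=> [{}R|{}R x {}Q cp _ [IH1 IH2 IH3]]; first by split=> [|y _|y ->] //; exact: subxx.
have xR := cp.1.
split.
- exact: subset_trans IH1 (subD1set R x).
- by move=> y yQ; rewrite IH2 // chi_point_remove // (subsetP IH1).
- move=> y yR yQ; have [->|yx] := eqVneq y x; first exact: chi_point_W0.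
  by rewrite -(chi_point_remove cp) ?IH3 // !inE yx yR.
Qed.

Definition I (S : {set T}) (g : T -> int) := \sum_(x in S) g x * W S x.

Lemma chi_F (S F : {set T}) : is_filter S F ->
  euler_char F = \sum_(x in S) (x \in F)%:R * W S x.
Proof.
move=> fF; rewrite euler_W.
transitivity (\sum_(x in S | x \in F) W S x).
  rewrite [RHS](eq_bigl (fun x => x \in F)); last first.
    move=> k; case kF: (k \in F); last by rewrite andbF.
    by rewrite (subsetP fF.1).
  by apply: eq_bigr => k kF; rewrite (W_filter fF).
rewrite big_mkcondr /=; apply: eq_bigr => k _.
by case: (k \in F); rewrite ?mul1r ?mul0r.
Qed.

Lemma integral_char (S : {set T}) g v : is_euler_integral S g v -> v = I S g.
Proof.
move=> [r [Hf [Hg ->]]]; rewrite /I.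
under [RHS]eq_bigr => x xS do rewrite Hg // mulr_suml.
rewrite [RHS]exchange_big /= big_seq [RHS]big_seq; apply: eq_bigr => p pr.
rewrite (chi_F (Hf p pr)) mulr_sumr; apply: eq_bigr => x _.
by rewrite mulrA.
Qed.

Lemma integral_exists (S : {set T}) g : exists v, is_euler_integral S g v.
Proof.
set r := [seq (g x, [set y in S | (x <= y)%O]) | x <- enum S] ++
         [seq (- g x, strict_up S x) | x <- enum S].
exists (\sum_(p <- r) p.1 * euler_char p.2), r; split; last split => //.
  move=> p; rewrite mem_cat => /orP[] /mapP [x _ ->] /=.
    exact: up_filter.
  exact: strict_up_filter.
move=> y yS; rewrite big_cat !big_map !big_enum /= -big_split /=.
rewrite (bigD1 y) //= big1.
  by rewrite !inE yS lexx ltxx mulr1 mulr0 addr0 addr0.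
move=> x /andP[_ xy]; rewrite !inE yS /= lt_def eq_sym (negbTE xy) /=.
by rewrite mulNr addrN.
Qed.
End Aux.

Theorem theorem4p11 (d : Order.disp_t) (T : finPOrderType d)
  (Tg : finType) (loc : Tg -> T + (T * T))
  (Pchi : {set T}) :
  target_loc_ok loc ->
  chi_minimal_model Pchi ->
  let h : T -> int := fun x => Posz (count_fun loc x) in
  let Ptilde : {set T} := [set x in Pchi | (1 <= count_fun loc x)%N] in
  (exists v, is_euler_integral Ptilde h v /\ is_euler_integral [set: T] h v) /\
  (forall v1 v2, is_euler_integral Ptilde h v1 ->
                 is_euler_integral [set: T] h v2 -> v1 = v2).
Proof.
move=> _ [red _] h Pt.
have [R1 R2 R3] := reduction_W red.
have mono : forall x y, (x <= y)%O -> (count_fun loc x <= count_fun loc y)%N.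
  move=> x y xy; apply: subset_leq_card; apply/subsetP => t; rewrite !inE.
  case: (loc t) => [z|[z w]] /=; first by move=> zx; exact: le_trans zx xy.
  by move=> /andP[zx wx]; rewrite (le_trans zx xy) (le_trans wx xy).
have filt : is_filter Pchi Pt.
  split; first by apply/subsetP => x; rewrite inE => /andP[].
  move=> x y; rewrite !inE => /andP[_ hx] -> xy /=; exact: leq_trans hx (mono _ _ xy).
have key : I Pt h = I [set: T] h.
  rewrite /I [RHS](bigID (fun x => x \in Pchi)) /= [X in _ = _ + X]big1 ?addr0; last first.
    by move=> x /andP[_ xP]; rewrite (R3 x) ?inE ?mulr0.
  rewrite [RHS](bigID (fun x => x \in Pt)) /= [X in _ = _ + X]big1 ?addr0; last first.
    move=> x /andP[/andP[_ xP] xPt]; move: xPt; rewrite inE xP /= /h.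
    by case: (count_fun loc x) => // _; rewrite mul0r.
  apply: eq_big => [x|x xPt].
    by case xPt: (x \in Pt); rewrite ?andbF // inE (subsetP filt.1 _ xPt).
  by rewrite (W_filter filt xPt) -R2 // (subsetP filt.1).
split.
  exists (I Pt h); split.
    by have [v Hv] := integral_exists Pt h; rewrite -(integral_char Hv).
  by have [v Hv] := integral_exists [set: T] h; rewrite key -(integral_char Hv).
by move=> v1 v2 /integral_char -> /integral_char ->.
Qed.
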